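(* Let $(X,\Sigma,\mu)$ be a measure space, $n\ge1$, $\mathbb{F}\in\{\mathbb{R},\mathbb{C}\}$, and $h\in L^2(X,\mu;\mathbb{F})$ with $h\neq0$. Define $T:L^2(X,\mu;\mathbb{F}^n)\to\mathbb{F}^n$ by $T(F)=\int_X h(x)f_x\,d\mu(x)$ for $F=(f_x)_{x\in X}$ (integral taken coordinatewise). Let $d\in\mathbb{F}^n$ and assume $\dim L^2(X,\mu;\mathbb{F})\ge n$ if $d\ne0$, and $\dim L^2(X,\mu;\mathbb{F})\ge n+1$ if $d=0$. Then $T^{-1}(\{d\})$ contains a continuous frame $\Phi\in\mathcal{F}^{\mathbb{F}}_{(X,\mu),n}$.
   Context: A family $\Phi=(\varphi_x)_{x\in X}$ in $\mathbb{F}^n$ (with measurable coordinates) is a continuous frame indexed by $(X,\mu)$ if there are $0<A\le B$ with $A\|v\|^2\le\int_X|\langle v,\varphi_x\rangle|^2d\mu(x)\le B\|v\|^2$ for all $v\in\mathbb{F}^n$. $\mathcal{F}^{\mathbb{F}}_{(X,\mu),n}$ denotes the set of such frames, viewed as a subset of $L^2(X,\mu;\mathbb{F}^n)$. (Recall: a family in $\mathbb{F}^n$ is a continuous frame iff it lies in $L^2(X,\mu;\mathbb{F}^n)$ and its coordinate functions $\Phi^k=(\varphi^k_x)_{x\in X}$, $k=1,\dots,n$, are linearly independent in $L^2(X,\mu;\mathbb{F})$.) *)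

(* Defs.v *)
From HB Require Import structures.
From mathcomp Require Import all_boot all_order all_algebra.
From mathcomp Require Import all_classical all_reals all_analysis.
From mathcomp Require Import complex.
Set Implicit Arguments. Unset Strict Implicit. Unset Printing Implicit Defensive.
Import Order.TTheory GRing.Theory Num.Theory.
Local Open Scope classical_set_scope.
Local Open Scope ring_scope.

(* Scalars: the field F is encoded by a boolean [cplx]:
   cplx = true  : F = C  (= R[i]),
   cplx = false : F = R  (embedded in R[i] as the elements with Im = 0).
   All F-valued objects are represented as R[i]-valued objects lying in F. *)
Notation C R := (complex.complex R).

Section Defs.
Variables (R : realType).

Definition inF (cplx : bool) (z : C R) : Prop := cplx \/ complex.Im z = 0.

Definition normsq (z : C R) : R := complex.Re z ^+ 2 + complex.Im z ^+ 2.

Definition cinner (n : nat) (v w : 'I_n -> C R) : C R :=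
  \sum_(k < n) v k * complex.conjc (w k).

Definition vnormsq (n : nat) (v : 'I_n -> C R) : R := \sum_(k < n) normsq (v k).

Variables (d : measure_display) (X : measurableType d)
  (mu : {measure set X -> \bar R}).

Definition measC (f : X -> C R) : Prop :=
  measurable_fun setT (fun x => complex.Re (f x)) /\
  measurable_fun setT (fun x => complex.Im (f x)).

Definition L2F (cplx : bool) (f : X -> C R) : Prop :=
  (forall x, inF cplx (f x)) /\ measC f /\
  (\int[mu]_x (normsq (f x))%:E < +oo)%E.

Definition cint (f : X -> C R) : C R :=
  complex.Complex (fine (\int[mu]_x (complex.Re (f x))%:E))
                  (fine (\int[mu]_x (complex.Im (f x))%:E)).

Definition Top (n : nat) (h : X -> C R) (Phi : X -> 'I_n -> C R) : 'I_n -> C R :=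
  fun k => cint (fun x => h x * Phi x k).

Definition is_cframe (cplx : bool) (n : nat) (Phi : X -> 'I_n -> C R) : Prop :=
  (forall x k, inF cplx (Phi x k)) /\
  (forall k, measC (fun x => Phi x k)) /\
  exists A B : R, 0 < A /\ A <= B /\
    forall v : 'I_n -> C R, (forall k, inF cplx (v k)) ->
      ((A * vnormsq v)%:E <= \int[mu]_x (normsq (cinner v (Phi x)))%:E)%E /\
      (\int[mu]_x (normsq (cinner v (Phi x)))%:E <= (B * vnormsq v)%:E)%E.

(* dim L^2(X, mu; F) >= m : there are m elements of L^2(X,mu;F) that are
   linearly independent over F (in L^2, i.e. modulo mu-a.e. equality) *)
Definition L2dim_ge (cplx : bool) (m : nat) : Prop :=
  exists g : 'I_m -> X -> C R,
    (forall i, L2F cplx (g i)) /\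
    forall c : 'I_m -> C R, (forall i, inF cplx (c i)) ->
      {ae mu, forall x, \sum_(i < m) c i * g i x = 0} -> forall i, c i = 0.

End Defs.

(* Main.v *)
Require Import Defs.
From HB Require Import structures.
From mathcomp Require Import all_boot all_order all_algebra.
From mathcomp Require Import all_classical all_reals all_analysis.
From mathcomp Require Import complex.
From mathcomp Require Import measurable_realfun.
From mathcomp Require Import ring lra.
Import Order.TTheory GRing.Theory Num.Theory.
Local Open Scope classical_set_scope.
Local Open Scope ring_scope.
Set Implicit Arguments. Unset Strict Implicit. Unset Printing Implicit Defensive.


Section CFacts.
Context {R : realType}.
Implicit Types x y z : C R.

Lemma cext x y : complex.Re x = complex.Re y -> complex.Im x = complex.Im y -> x = y.
Proof. by case: x => a b; case: y => c e /= -> ->. Qed.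
Lemma cReD x y : @complex.Re R (x + y) = complex.Re x + complex.Re y.
Proof. by case: x => a b; case: y. Qed.
Lemma cImD x y : @complex.Im R (x + y) = complex.Im x + complex.Im y.
Proof. by case: x => a b; case: y. Qed.
Lemma cReN x : @complex.Re R (- x) = - complex.Re x.
Proof. by case: x. Qed.
Lemma cImN x : @complex.Im R (- x) = - complex.Im x.
Proof. by case: x. Qed.
Lemma cReM x y : @complex.Re R (x * y) = complex.Re x * complex.Re y - complex.Im x * complex.Im y.
Proof. by case: x => a b; case: y. Qed.
Lemma cImM x y : @complex.Im R (x * y) = complex.Re x * complex.Im y + complex.Im x * complex.Re y.
Proof. by case: x => a b; case: y. Qed.
Lemma cReJ x : @complex.Re R (complex.conjc x) = complex.Re x.
Proof. by case: x. Qed.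
Lemma cImJ x : @complex.Im R (complex.conjc x) = - complex.Im x.
Proof. by case: x. Qed.
Lemma cRe0 : @complex.Re R (0 : C R) = 0. Proof. by []. Qed.
Lemma cIm0 : @complex.Im R (0 : C R) = 0. Proof. by []. Qed.
Lemma cRe1 : @complex.Re R (1 : C R) = 1. Proof. by []. Qed.
Lemma cIm1 : @complex.Im R (1 : C R) = 0. Proof. by []. Qed.
Lemma cReR (r : R) : @complex.Re R (complex.Complex r 0) = r. Proof. by []. Qed.
Lemma cImR (r : R) : @complex.Im R (complex.Complex r 0) = 0. Proof. by []. Qed.
Lemma cReV x : @complex.Re R (x^-1) = complex.Re x / normsq x.
Proof. by case: x. Qed.
Lemma cImV x : @complex.Im R (x^-1) = - (complex.Im x / normsq x).
Proof. by case: x. Qed.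
Lemma cReB x y : @complex.Re R (x - y) = complex.Re x - complex.Re y.
Proof. by rewrite cReD cReN. Qed.
Lemma cImB x y : @complex.Im R (x - y) = complex.Im x - complex.Im y.
Proof. by rewrite cImD cImN. Qed.

Lemma cRe_sum I (s : seq I) (P : pred I) (F : I -> C R) :
  @complex.Re R (\sum_(i <- s | P i) F i) = \sum_(i <- s | P i) @complex.Re R (F i).
Proof. by elim/big_rec2: _ => // i a b _ <-; rewrite cReD. Qed.
Lemma cIm_sum I (s : seq I) (P : pred I) (F : I -> C R) :
  @complex.Im R (\sum_(i <- s | P i) F i) = \sum_(i <- s | P i) @complex.Im R (F i).
Proof. by elim/big_rec2: _ => // i a b _ <-; rewrite cImD. Qed.

Definition cReIm := (cReD, cImD, cReN, cImN, cReM, cImM, cReJ, cImJ, cRe0, cIm0, cRe1, cIm1, cReR, cImR).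

Lemma normsq_ge0 x : 0 <= normsq x.
Proof. rewrite /normsq; nra. Qed.
Lemma normsq_eq0 x : normsq x = 0 -> x = 0.
Proof.
case: x => a b; rewrite /normsq /= => /eqP.
by rewrite paddr_eq0 ?sqr_ge0 // !sqrf_eq0 => /andP[/eqP-> /eqP->].
Qed.
Lemma normsq0 : normsq (0 : C R) = 0.
Proof. by rewrite /normsq /=; ring. Qed.
Lemma normsqM x y : normsq (x * y) = normsq x * normsq y.
Proof. rewrite /normsq !cReIm; ring. Qed.
Lemma normsqJ x : normsq (complex.conjc x) = normsq x.
Proof. rewrite /normsq !cReIm; ring. Qed.
Lemma normsqN x : normsq (- x) = normsq x.
Proof. rewrite /normsq !cReIm; ring. Qed.
Lemma normsqD_le x y : normsq (x + y) <= 2 * normsq x + 2 * normsq y.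
Proof.
rewrite /normsq !cReIm.
have := sqr_ge0 (complex.Re x - complex.Re y).
have := sqr_ge0 (complex.Im x - complex.Im y).
rewrite !expr2 => h1 h2; nra.
Qed.
Lemma mulJ x : x * complex.conjc x = complex.Complex (normsq x) 0.
Proof. apply: cext; rewrite !cReIm /normsq; ring. Qed.
Lemma normsq_neq0 x : x != 0 -> 0 < normsq x.
Proof.
move=> hx; rewrite lt_def normsq_ge0 andbT; apply/eqP => /normsq_eq0 h.
by rewrite h eqxx in hx.
Qed.

Lemma normsq_sum_le (m : nat) (F : 'I_m -> C R) :
  normsq (\sum_(i < m) F i) <= 2 ^+ m * \sum_(i < m) normsq (F i).
Proof.
elim: m F => [|m IH] F; first by rewrite !big_ord0 normsq0 mulr0.
rewrite !big_ord_recl; apply: le_trans (normsqD_le _ _) _.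
have h3 := IH (fun i => F (lift ord0 i)).
have h2 := normsq_ge0 (F ord0).
have h1 : 1 <= 2 ^+ m :> R by apply: exprn_ege1; lra.
rewrite exprS; move: h1 h2 h3.
move: (normsq (F ord0)) (normsq (\sum_(i < m) F (lift ord0 i))) (\sum_(i < m) normsq (F (lift ord0 i))) (2 ^+ m : R) => a b S p h1 h2 h3.
have h4 : 0 <= (p - 1) * a by apply: mulr_ge0; lra.
nra.
Qed.

Lemma sum_le_single (m : nat) (G : 'I_m -> R) (i : 'I_m) :
  (forall j, 0 <= G j) -> G i <= \sum_(j < m) G j.
Proof.
move=> h; rewrite (bigD1 i) //= lerDl; apply: sumr_ge0 => j _; exact: h.
Qed.

Lemma inF0 c : inF c (0 : C R). Proof. by right. Qed.
Lemma inF1 c : inF c (1 : C R). Proof. by right. Qed.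
Lemma inFR c (r : R) : inF c (complex.Complex r 0). Proof. by right. Qed.
Lemma inFD c x y : inF c x -> inF c y -> inF c (x + y).
Proof. by case=> [->|hx]; [left|case=> [->|hy]; [left|right; rewrite cImD hx hy addr0]]. Qed.
Lemma inFN c x : inF c x -> inF c (- x).
Proof. by case=> [->|hx]; [left|right; rewrite cImN hx oppr0]. Qed.
Lemma inFB c x y : inF c x -> inF c y -> inF c (x - y).
Proof. by move=> hx hy; apply: inFD => //; apply: inFN. Qed.
Lemma inFM c x y : inF c x -> inF c y -> inF c (x * y).
Proof. by case=> [->|hx]; [left|case=> [->|hy]; [left|right; rewrite cImM hx hy; ring]]. Qed.
Lemma inFJ c x : inF c x -> inF c (complex.conjc x).
Proof. by case=> [->|hx]; [left|right; rewrite cImJ hx oppr0]. Qed.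
Lemma inFV c x : inF c x -> inF c (x^-1).
Proof. by case=> [->|hx]; [left|right; rewrite cImV hx mul0r oppr0]. Qed.
Lemma inF_sum c (m : nat) (F : 'I_m -> C R) :
  (forall i, inF c (F i)) -> inF c (\sum_(i < m) F i).
Proof. by move=> h; elim/big_rec: _ => [|i a _ ha]; [exact: inF0|exact: inFD]. Qed.

End CFacts.


Section L2.
Context {R : realType} {d : measure_display} {X : measurableType d}
  (mu : {measure set X -> \bar R}).
Local Notation CR := (C R).

Definition Rint (r : X -> R) := mu.-integrable setT (EFin \o r).

Lemma RintD r s : Rint r -> Rint s -> Rint (fun x => r x + s x).
Proof.
move=> hr hs; apply: eq_integrable (integrableD _ hr hs) => //.
Qed.

Lemma RintZ k r : Rint r -> Rint (fun x => k * r x).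
Proof.
move=> hr; apply: eq_integrable (integrableZl _ k hr) => //.
Qed.

Lemma RintN r : Rint r -> Rint (fun x => - r x).
Proof.
move=> hr; apply: eq_integrable (RintZ (-1) hr) => // x _ /=.
by rewrite mulN1r.
Qed.

Lemma RintB r s : Rint r -> Rint s -> Rint (fun x => r x - s x).
Proof. by move=> hr hs; apply: RintD => //; exact: RintN. Qed.

Lemma Rint0 : Rint (fun _ : X => 0).
Proof. exact: integrable0. Qed.

Lemma Rint_le (r s : X -> R) : measurable_fun setT r -> (forall x, `|r x| <= s x) -> Rint s -> Rint r.
Proof.
move=> mr hrs hs; apply: le_integrable hs => //.
  exact/measurable_realfun.measurable_EFinP.
move=> x _ /=; rewrite lee_fin; apply: le_trans (hrs x) _.
exact: ler_norm.
Qed.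


Lemma mfun_ext (r s : X -> R) : (forall x, r x = s x) -> measurable_fun setT s -> measurable_fun setT r.
Proof. by move=> h; rewrite (funext h). Qed.

Lemma measC_add (f g : X -> CR) : measC f -> measC g -> measC (fun x => f x + g x).
Proof.
move=> [f1 f2] [g1 g2]; split.
  apply: (@mfun_ext _ (fun x => complex.Re (f x) + complex.Re (g x))).
    by move=> x; rewrite cReD.
  exact: measurable_funD.
apply: (@mfun_ext _ (fun x => complex.Im (f x) + complex.Im (g x))).
  by move=> x; rewrite cImD.
exact: measurable_funD.
Qed.

Lemma measC_mul (f g : X -> CR) : measC f -> measC g -> measC (fun x => f x * g x).
Proof.
move=> [f1 f2] [g1 g2]; split.
  apply: (@mfun_ext _ (fun x => complex.Re (f x) * complex.Re (g x) - complex.Im (f x) * complex.Im (g x))).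
    by move=> x; rewrite cReM.
  exact: (measurable_funB (measurable_funM f1 g1) (measurable_funM f2 g2)).
apply: (@mfun_ext _ (fun x => complex.Re (f x) * complex.Im (g x) + complex.Im (f x) * complex.Re (g x))).
  by move=> x; rewrite cImM.
exact: (measurable_funD (measurable_funM f1 g2) (measurable_funM f2 g1)).
Qed.

Lemma measC_cst (a : CR) : measC (fun _ : X => a).
Proof. by split; exact: measurable_cst. Qed.

Lemma measC_conj (f : X -> CR) : measC f -> measC (fun x => complex.conjc (f x)).
Proof.
move=> [f1 f2]; split.
  by apply: (@mfun_ext _ (fun x => complex.Re (f x))) => // x; rewrite cReJ.
apply: (@mfun_ext _ (fun x => - complex.Im (f x))); first by move=> x; rewrite cImJ.
exact: (measurable_funN f2).
Qed.

Lemma meas_normsq (f : X -> CR) : measC f -> measurable_fun setT (fun x => normsq (f x)).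
Proof.
by move=> [f1 f2]; rewrite /normsq; apply: measurable_funD; apply: measurable_funX.
Qed.

Definition L2 (f : X -> CR) := measC f /\ Rint (fun x => normsq (f x)).
Definition L1C (f : X -> CR) :=
  Rint (fun x => complex.Re (f x)) /\ Rint (fun x => complex.Im (f x)).

Lemma L2FE c (f : X -> CR) : L2F mu c f <-> (forall x, inF c (f x)) /\ L2 f.
Proof.
have key : measC f -> (Rint (fun x => normsq (f x)) <->
    (\int[mu]_x (normsq (f x))%:E < +oo)%E).
  move=> mf.
  have E : (\int[mu]_x `|(EFin \o (fun x => normsq (f x))) x| = \int[mu]_x (normsq (f x))%:E)%E.
    by apply: eq_integral => x _ /=; rewrite ger0_norm // normsq_ge0.
  split.
    by move/integrableP => [_]; rewrite E.
  move=> h; apply/integrableP; split.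
    exact/measurable_realfun.measurable_EFinP/meas_normsq.
  by rewrite E.
split.
  by move=> [h1 [h2 h3]]; split => //; split => //; apply/key.
by move=> [h1 [h2 h3]]; split => //; split => //; apply/key.
Qed.

Lemma L2_add (f g : X -> CR) : L2 f -> L2 g -> L2 (fun x => f x + g x).
Proof.
move=> [mf hf] [mg hg]; split; first exact: measC_add.
apply: (Rint_le (s := fun x => 2 * normsq (f x) + 2 * normsq (g x))).
- by apply: meas_normsq; exact: measC_add.
- move=> x; rewrite ger0_norm ?normsq_ge0 //; exact: normsqD_le.
- by apply: RintD; apply: RintZ.
Qed.

Lemma L2_mulc (a : CR) (f : X -> CR) : L2 f -> L2 (fun x => a * f x).
Proof.
move=> [mf hf]; split; first by apply: measC_mul => //; exact: measC_cst.
under eq_fun do rewrite normsqM; exact: RintZ.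
Qed.

Lemma L2_conj (f : X -> CR) : L2 f -> L2 (fun x => complex.conjc (f x)).
Proof.
move=> [mf hf]; split; first exact: measC_conj.
by under eq_fun do rewrite normsqJ.
Qed.

Lemma L2_0 : L2 (fun _ : X => 0).
Proof.
split; first exact: measC_cst.
by under eq_fun do rewrite normsq0; exact: Rint0.
Qed.

Lemma L2_opp (f : X -> CR) : L2 f -> L2 (fun x => - f x).
Proof.
move=> hf; have := L2_mulc (-1) hf; congr L2; apply: funext => x.
by rewrite mulN1r.
Qed.

Lemma L2_sub (f g : X -> CR) : L2 f -> L2 g -> L2 (fun x => f x - g x).
Proof. by move=> hf hg; apply: L2_add => //; exact: L2_opp. Qed.

Lemma L2_sum (m : nat) (F : 'I_m -> X -> CR) :
  (forall i, L2 (F i)) -> L2 (fun x => \sum_(i < m) F i x).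
Proof.
elim: m F => [|m IH] F hF.
  by under eq_fun do rewrite big_ord0; exact: L2_0.
under eq_fun do rewrite big_ord_recl.
apply: L2_add => //; exact: (IH (fun i => F (lift ord0 i))).
Qed.

Lemma L2_lin (m : nat) (c : 'I_m -> CR) (F : 'I_m -> X -> CR) :
  (forall i, L2 (F i)) -> L2 (fun x => \sum_(i < m) c i * F i x).
Proof. move=> hF; have := (@L2_sum m (fun i x => c i * F i x)); apply => i; exact: L2_mulc. Qed.

Lemma L1C_add (f g : X -> CR) : L1C f -> L1C g -> L1C (fun x => f x + g x).
Proof.
move=> [f1 f2] [g1 g2]; split.
  by under eq_fun do rewrite cReD; exact: RintD.
by under eq_fun do rewrite cImD; exact: RintD.
Qed.

Lemma L1C_mulc (a : CR) (f : X -> CR) : L1C f -> L1C (fun x => a * f x).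
Proof.
move=> [f1 f2]; split.
  by under eq_fun do rewrite cReM; apply: RintB; apply: RintZ.
by under eq_fun do rewrite cImM; apply: RintD; apply: RintZ.
Qed.

Lemma L1C_0 : L1C (fun _ : X => 0).
Proof. by split; exact: Rint0. Qed.

Lemma L1C_mul (f g : X -> CR) : L2 f -> L2 g -> L1C (fun x => f x * g x).
Proof.
move=> [mf hf] [mg hg].
have [mr mi] := measC_mul mf mg.
split.
- apply: (Rint_le mr (s := fun x => normsq (f x) + normsq (g x))); last exact: RintD.
  move=> x; rewrite cReM /normsq.
  set a := complex.Re (f x); set b := complex.Im (f x).
  set c := complex.Re (g x); set e := complex.Im (g x).
  have := sqr_ge0 (a - c); have := sqr_ge0 (a + c);
  have := sqr_ge0 (b - e); have := sqr_ge0 (b + e).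
  rewrite !expr2 => h1 h2 h3 h4.
  rewrite ler_norml; apply/andP; split; nra.
- apply: (Rint_le mi (s := fun x => normsq (f x) + normsq (g x))); last exact: RintD.
  move=> x; rewrite cImM /normsq.
  set a := complex.Re (f x); set b := complex.Im (f x).
  set c := complex.Re (g x); set e := complex.Im (g x).
  have := sqr_ge0 (a - e); have := sqr_ge0 (a + e);
  have := sqr_ge0 (b - c); have := sqr_ge0 (b + c).
  rewrite !expr2 => h1 h2 h3 h4.
  rewrite ler_norml; apply/andP; split; nra.
Qed.

Definition RI (r : X -> R) := Rintegral mu setT r.

Lemma cintE (f : X -> CR) :
  cint mu f = complex.Complex (RI (fun x => complex.Re (f x))) (RI (fun x => complex.Im (f x))).
Proof. by []. Qed.

Lemma RI_add r s : Rint r -> Rint s -> RI (fun x => r x + s x) = RI r + RI s.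
Proof. by move=> hr hs; rewrite /RI RintegralD. Qed.

Lemma RI_scale k r : Rint r -> RI (fun x => k * r x) = k * RI r.
Proof. by move=> hr; rewrite /RI RintegralZl. Qed.

Lemma RI_ext r s : (forall x, r x = s x) -> RI r = RI s.
Proof. by move=> h; congr RI; apply: funext. Qed.

Lemma RI0 : RI (fun _ : X => 0) = 0.
Proof. by rewrite /RI /Rintegral integral0. Qed.

Lemma RI_opp r : Rint r -> RI (fun x => - r x) = - RI r.
Proof.
move=> hr; rewrite -mulN1r -RI_scale //; apply: RI_ext => x; by rewrite mulN1r.
Qed.

Lemma RI_sub r s : Rint r -> Rint s -> RI (fun x => r x - s x) = RI r - RI s.
Proof. by move=> hr hs; rewrite RI_add ?RI_opp //; exact: RintN. Qed.

Lemma cint_add (f g : X -> CR) : L1C f -> L1C g ->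
  cint mu (fun x => f x + g x) = cint mu f + cint mu g.
Proof.
move=> [f1 f2] [g1 g2]; rewrite !cintE; apply: cext; rewrite !cReIm /=.
  by rewrite -RI_add //; apply: RI_ext => x; rewrite cReD.
by rewrite -RI_add //; apply: RI_ext => x; rewrite cImD.
Qed.

Lemma cint_mulc (a : CR) (f : X -> CR) : L1C f ->
  cint mu (fun x => a * f x) = a * cint mu f.
Proof.
move=> [f1 f2]; rewrite !cintE; apply: cext; rewrite !cReIm /=.
  rewrite -!RI_scale // -RI_sub; try exact: RintZ.
  by apply: RI_ext => x; rewrite cReM.
rewrite -!RI_scale // -RI_add; try exact: RintZ.
by apply: RI_ext => x; rewrite cImM.
Qed.

Lemma cint_conj (f : X -> CR) : L1C f ->
  cint mu (fun x => complex.conjc (f x)) = complex.conjc (cint mu f).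
Proof.
move=> [f1 f2]; rewrite !cintE; apply: cext; rewrite !cReIm /=.
  by apply: RI_ext => x; rewrite cReJ.
by rewrite -RI_opp //; apply: RI_ext => x; rewrite cImJ.
Qed.

Lemma cint_ext (f g : X -> CR) : (forall x, f x = g x) -> cint mu f = cint mu g.
Proof. by move=> h; congr cint; apply: funext. Qed.

End L2.


Section IP.
Context {R : realType} {d : measure_display} {X : measurableType d}
  (mu : {measure set X -> \bar R}).
Local Notation CR := (C R).
Local Notation L2 := (L2 mu).

Definition ip (f g : X -> CR) := cint mu (fun x => f x * complex.conjc (g x)).
Definition nrm (f : X -> CR) := RI mu (fun x => normsq (f x)).

Lemma nrm_ext f g : (forall x, f x = g x) -> nrm f = nrm g.
Proof. by move=> h; congr nrm; apply: funext. Qed.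

Lemma ip_extl f g k : (forall x, f x = g x) -> ip f k = ip g k.
Proof. by move=> h; congr ip; apply: funext. Qed.

Lemma nrm_ge0 f : 0 <= nrm f.
Proof. by apply: Rintegral_ge0 => x _; exact: normsq_ge0. Qed.

Lemma L1C_ip f g : L2 f -> L2 g -> L1C mu (fun x => f x * complex.conjc (g x)).
Proof. by move=> hf hg; apply: L1C_mul => //; exact: L2_conj. Qed.

Lemma ip_addl f g k : L2 f -> L2 g -> L2 k ->
  ip (fun x => f x + g x) k = ip f k + ip g k.
Proof.
move=> hf hg hk; rewrite /ip -cint_add; try exact: L1C_ip.
by apply: cint_ext => x; rewrite mulrDl.
Qed.

Lemma ip_mulcl a f k : L2 f -> L2 k ->
  ip (fun x => a * f x) k = a * ip f k.
Proof.
move=> hf hk; rewrite /ip -cint_mulc; last exact: L1C_ip.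
by apply: cint_ext => x; rewrite mulrA.
Qed.

Lemma ip_conj f g : L2 f -> L2 g -> ip g f = complex.conjc (ip f g).
Proof.
move=> hf hg; rewrite /ip -cint_conj; last exact: L1C_ip.
apply: cint_ext => x; rewrite rmorphM /= conjcK mulrC //.
Qed.

Lemma ip_self f : ip f f = complex.Complex (nrm f) 0.
Proof.
rewrite /ip cintE; apply: cext => /=.
  by apply: RI_ext => x; rewrite mulJ.
by rewrite -(RI0 mu); apply: RI_ext => x; rewrite mulJ.
Qed.

Lemma ip0l k : ip (fun _ => 0) k = 0.
Proof.
rewrite /ip cintE; apply: cext => /=.
  by rewrite -(RI0 mu); apply: RI_ext => x; rewrite mul0r.
by rewrite -(RI0 mu); apply: RI_ext => x; rewrite mul0r.
Qed.

Lemma ip_addr f g k : L2 f -> L2 g -> L2 k ->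
  ip k (fun x => f x + g x) = ip k f + ip k g.
Proof.
move=> hf hg hk.
by rewrite (ip_conj (L2_add hf hg) hk) ip_addl // rmorphD (ip_conj hf hk) (ip_conj hg hk).
Qed.

Lemma ip_mulcr a f k : L2 f -> L2 k ->
  ip k (fun x => a * f x) = complex.conjc a * ip k f.
Proof.
move=> hf hk.
by rewrite (ip_conj (L2_mulc a hf) hk) ip_mulcl // rmorphM (ip_conj hf hk).
Qed.

Lemma ip_suml (m : nat) (F : 'I_m -> X -> CR) k : (forall i, L2 (F i)) -> L2 k ->
  ip (fun x => \sum_(i < m) F i x) k = \sum_(i < m) ip (F i) k.
Proof.
elim: m F => [|m IH] F hF hk.
  rewrite big_ord0; transitivity (ip (fun _ : X => 0) k); last exact: ip0l.
  by apply: ip_extl => x; rewrite big_ord0.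
have hS : L2 (fun x => \sum_(i < m) F (lift ord0 i) x).
  by have := (@L2_sum _ _ _ mu m (fun i => F (lift ord0 i))); apply.
rewrite big_ord_recl -(IH (fun i => F (lift ord0 i))) // -(ip_addl (hF ord0) hS hk).
by apply: ip_extl => x; rewrite big_ord_recl.
Qed.

Lemma nrm_Pyth a u P : L2 u -> L2 P -> ip P u = 0 ->
  nrm (fun x => a * u x + P x) = normsq a * nrm u + nrm P.
Proof.
move=> hu hP h0.
have hau : L2 (fun x => a * u x) by exact: L2_mulc.
have hS : L2 (fun x => a * u x + P x) by exact: L2_add.
have e := ip_self (fun x => a * u x + P x).
rewrite (ip_addl hau hP hS) (ip_mulcl a hu hS) (ip_addr hau hP hu) (ip_addr hau hP hP) in e.
rewrite (ip_mulcr a hu hu) (ip_mulcr a hu hP) (ip_conj hP hu) h0 !ip_self in e.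
have e2 := congr1 (@complex.Re R) e.
rewrite /= in e2; rewrite -e2.
rewrite !(cReD, cReM, cImM, cReJ, cImJ, cImD) /= /normsq.
rewrite !(mulr0, mul0r, addr0, add0r, subr0, oppr0).
ring.
Qed.

Lemma nrm_mulc a f : L2 f -> nrm (fun x => a * f x) = normsq a * nrm f.
Proof.
move=> [_ hf]; rewrite /nrm -RI_scale //; apply: RI_ext => x; exact: normsqM.
Qed.

Lemma nrm_add_le f g : L2 f -> L2 g ->
  nrm (fun x => f x + g x) <= 2 * nrm f + 2 * nrm g.
Proof.
move=> hf hg; have [_ hfg] := L2_add hf hg.
case: hf => _ hf; case: hg => _ hg.
rewrite /nrm -!RI_scale // -RI_add; try exact: RintZ.
apply: le_Rintegral => //; first by apply: RintD; apply: RintZ.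
move=> x _; exact: normsqD_le.
Qed.

Lemma nrm_zero_comb a b f g : L2 f -> L2 g -> nrm f = 0 -> nrm g = 0 ->
  nrm (fun x => a * f x + b * g x) = 0.
Proof.
move=> hf hg h1 h2; apply/eqP; rewrite eq_le nrm_ge0 andbT.
apply: le_trans (nrm_add_le (L2_mulc a hf) (L2_mulc b hg)) _.
by rewrite !nrm_mulc // h1 h2 !mulr0 addr0.
Qed.

Lemma nrm_lin_le (m : nat) (w : 'I_m -> CR) (F : 'I_m -> X -> CR) :
  (forall i, L2 (F i)) ->
  nrm (fun x => \sum_(i < m) w i * F i x) <= 2 ^+ m * \sum_(i < m) normsq (w i) * nrm (F i).
Proof.
elim: m w F => [|m IH] w F hF.
  rewrite big_ord0 mulr0 (@nrm_ext _ (fun _ => 0)); last by move=> x; rewrite big_ord0.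
  by rewrite /nrm (@RI_ext _ _ _ mu _ (fun _ => 0)) ?RI0 // => x; rewrite normsq0.
rewrite (@nrm_ext _ (fun x => w ord0 * F ord0 x + \sum_(i < m) w (lift ord0 i) * F (lift ord0 i) x)); last first.
  by move=> x; rewrite big_ord_recl.
have hS : L2 (fun x => \sum_(i < m) w (lift ord0 i) * F (lift ord0 i) x).
  by apply: L2_lin => i; exact: hF.
apply: le_trans (nrm_add_le (L2_mulc _ (hF ord0)) hS) _.
rewrite nrm_mulc // big_ord_recl.
have h3 := IH (fun i => w (lift ord0 i)) (fun i => F (lift ord0 i)) (fun i => hF _).
have h2 : 0 <= normsq (w ord0) * nrm (F ord0) by apply: mulr_ge0; [exact: normsq_ge0|exact: nrm_ge0].
have h1 : 1 <= 2 ^+ m :> R by apply: exprn_ege1; lra.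
rewrite exprS; move: h1 h2 h3.
move: (normsq (w ord0) * nrm (F ord0)) (nrm (fun x => \sum_(i < m) w (lift ord0 i) * F (lift ord0 i) x)) (\sum_(i < m) normsq (w (lift ord0 i)) * nrm (F (lift ord0 i))) (2 ^+ m : R) => a b S p h1 h2 h3.
have h4 : 0 <= (p - 1) * a by apply: mulr_ge0; lra.
nra.
Qed.

Lemma int_nrm f : L2 f -> (\int[mu]_x (normsq (f x))%:E)%E = (nrm f)%:E.
Proof. by move=> [_ hf]; rewrite /nrm /RI /Rintegral fineK //; exact: integrable_fin_num. Qed.

Lemma nrm0_ae f : L2 f -> nrm f = 0 -> {ae mu, forall x, f x = 0}.
Proof.
move=> hf h0.
have hm : measurable_fun setT (EFin \o (fun x => normsq (f x))).
  by apply/measurable_realfun.measurable_EFinP; apply: meas_normsq; case: hf.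
have : (\int[mu]_(x in setT) `|(EFin \o (fun x => normsq (f x))) x| = 0)%E.
  rewrite -[RHS](_ : (0%:E = 0)%E) // -h0 -int_nrm //.
  by apply: eq_integral => x _ /=; rewrite ger0_norm // normsq_ge0.
move/(ae_eq_integral_abs mu measurableT hm).
apply: filterS => x /= /(_ I) [] /normsq_eq0 //.
Qed.

Lemma ae_nrm0 f : L2 f -> {ae mu, forall x, f x = 0} -> nrm f = 0.
Proof.
move=> hf hae.
have hm : measurable_fun setT (EFin \o (fun x => normsq (f x))).
  by apply/measurable_realfun.measurable_EFinP; apply: meas_normsq; case: hf.
have : ae_eq mu setT (EFin \o (fun x => normsq (f x))) (cst 0%E).
  by apply: filterS hae => x /= -> _; rewrite normsq0.
move/(ae_eq_integral_abs mu measurableT hm) => h.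
have : (nrm f)%:E = 0%E.
  rewrite -int_nrm // -h; by apply: eq_integral => x _ /=; rewrite ger0_norm ?normsq_ge0.
by move=> [].
Qed.

Lemma ip_inF c f g : (forall x, inF c (f x)) -> (forall x, inF c (g x)) -> inF c (ip f g).
Proof.
case: c => hf hg; first by left.
right; rewrite /ip cintE /= -(RI0 mu); apply: RI_ext => x.
by have [|] := inFM (hf x) (inFJ (hg x)).
Qed.

End IP.


Section Lin.
Context {R : realType}.
Local Notation CR := (C R).

Lemma sum_lin (m : nat) (a b : 'I_m -> CR) (g : 'I_m -> CR) (y : CR) :
  \sum_(j < m) a j * (g j + (- b j) * y) =
  \sum_(j < m) a j * g j - (\sum_(j < m) a j * b j) * y.
Proof. rewrite mulr_suml -sumrB; apply: eq_bigr => j _; ring. Qed.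

End Lin.

Section Frame.
Context {R : realType} {d : measure_display} {X : measurableType d}
  (mu : {measure set X -> \bar R}) (c : bool).
Local Notation CR := (C R).
Local Notation L2 := (L2 mu).
Local Notation nrm := (nrm mu).
Local Notation ip := (ip mu).

Definition indep (m : nat) (f : 'I_m -> X -> CR) :=
  forall w : 'I_m -> CR, (forall i, inF c (w i)) ->
    nrm (fun x => \sum_(i < m) w i * f i x) = 0 -> forall i, w i = 0.

Lemma lower (m : nat) : forall f : 'I_m -> X -> CR,
  (forall i, L2 (f i)) -> (forall i x, inF c (f i x)) -> indep f ->
  exists lam : R, 0 < lam /\ forall w, (forall i, inF c (w i)) ->
     lam * \sum_(i < m) normsq (w i) <= nrm (fun x => \sum_(i < m) w i * f i x).
Proof.
elim: m => [|m IH] f hL hF hI.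
  by exists 1; split => // w _; rewrite big_ord0 mulr0; exact: nrm_ge0.
pose f0 := f ord0.
pose N := nrm f0.
have hN : 0 < N.
  rewrite lt_def nrm_ge0 andbT; apply/eqP => h0.
  pose e := fun i : 'I_m.+1 => if i == ord0 then (1 : CR) else 0.
  have he : forall i, inF c (e i).
    by move=> i; rewrite /e; case: (i == ord0); [exact: inF1|exact: inF0].
  have hs : nrm (fun x => \sum_(i < m.+1) e i * f i x) = 0.
    rewrite -h0; apply: nrm_ext => x; rewrite big_ord_recl /e eqxx mul1r big1 ?addr0 //.
    by move=> i _; rewrite eq_sym (negbTE (neq_lift _ _)) mul0r.
  by have := hI e he hs ord0; rewrite /e eqxx => /eqP; rewrite oner_eq0.
pose Nc : CR := complex.Complex N 0.
have hNc : Nc != 0.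
  apply/eqP => /(congr1 (@complex.Re R)) /= h; by rewrite h ltxx in hN.
pose al := fun j : 'I_m => ip (f (lift ord0 j)) f0 / Nc.
pose p := fun (j : 'I_m) x => f (lift ord0 j) x + (- al j) * f0 x.
have halF : forall j, inF c (al j).
  move=> j; apply: inFM; first by apply: ip_inF => x; exact: hF.
  exact/inFV/inFR.
have hpL : forall j, L2 (p j).
  by move=> j; rewrite /p; apply: L2_add; [exact: hL|apply: L2_mulc; exact: hL].
have hpF : forall j x, inF c (p j x).
  by move=> j x; rewrite /p; apply: inFD; [exact: hF|apply: inFM; [apply: inFN; exact: halF|exact: hF]].
have hp0 : forall j, ip (p j) f0 = 0.
  move=> j; rewrite /p (ip_addl (hL _) (L2_mulc _ (hL ord0)) (hL ord0)).
  rewrite (ip_mulcl _ (hL ord0) (hL ord0)) ip_self -/N -/Nc /al mulNr mulfVK //; exact: subrr.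
have hpI : indep p.
  move=> v hv hv0 j.
  pose v' := fun k : 'I_m.+1 => if unlift ord0 k is Some j then v j
                                else - \sum_(j < m) v j * al j.
  have hv'F : forall k, inF c (v' k).
    move=> k; rewrite /v'; case: (unlift ord0 k) => [j'|]; first exact: hv.
    apply/inFN/inF_sum => j'; exact: inFM.
  have hs : nrm (fun x => \sum_(k < m.+1) v' k * f k x) = 0.
    rewrite -hv0; apply: nrm_ext => x.
    rewrite big_ord_recl /= /v' unlift_none /p sum_lin.
    under eq_bigr do rewrite liftK.
    rewrite /f0; ring.
  by have := hI v' hv'F hs (lift ord0 j); rewrite /v' liftK.
have [lam' [hlam' Hlam']] := IH p hpL hpF hpI.
pose A := \sum_(j < m) normsq (al j).
pose K := 2 ^+ m.+1 * A + 1.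
have hA : 0 <= A by apply: sumr_ge0 => j _; exact: normsq_ge0.
have hK : 0 < K by rewrite /K; apply: ltr_wpDl => //; apply: mulr_ge0 => //; apply: exprn_ge0.
exists (Num.min (N / 2) (lam' / K)); split.
  by rewrite lt_min; apply/andP; split; apply: divr_gt0.
move=> w hw.
pose w' := fun j => w (lift ord0 j).
pose a := w ord0 + \sum_(j < m) w' j * al j.
pose P := fun x => \sum_(j < m) w' j * p j x.
have hPL : L2 P by apply: L2_lin.
have hP0 : ip P f0 = 0.
  rewrite /P (@ip_suml _ _ _ mu m (fun j x => w' j * p j x) f0 (fun j => L2_mulc _ (hpL j)) (hL ord0)).
  by apply: big1 => j _; rewrite (ip_mulcl _ (hpL j) (hL ord0)) hp0 mulr0.
have e1 : nrm (fun x => \sum_(i < m.+1) w i * f i x) = normsq a * N + nrm P.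
  rewrite /N -(nrm_Pyth a (hL ord0) hPL hP0); apply: nrm_ext => x.
  rewrite big_ord_recl /P /p sum_lin /a /f0 /w'; ring.
have e2 : lam' * \sum_(j < m) normsq (w' j) <= nrm P.
  by apply: Hlam' => j; exact: hw.
have e3 : \sum_(i < m.+1) normsq (w i) <= 2 * normsq a + K * \sum_(j < m) normsq (w' j).
  rewrite big_ord_recl.
  have -> : w ord0 = a + - (\sum_(j < m) w' j * al j) by rewrite /a; ring.
  apply: le_trans (lerD (normsqD_le _ _) (lexx _)) _.
  rewrite normsqN.
  have h4 : normsq (\sum_(j < m) w' j * al j) <= 2 ^+ m * (A * \sum_(j < m) normsq (w' j)).
    apply: le_trans (normsq_sum_le _) _; apply: ler_wpM2l; first exact: exprn_ge0.
    rewrite mulr_sumr; apply: ler_sum => j _; rewrite normsqM mulrC.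
    apply: ler_wpM2r; first exact: normsq_ge0.
    by apply: sum_le_single => j'; exact: normsq_ge0.
  have -> : \sum_(i < m) normsq (w (lift ord0 i)) = \sum_(j < m) normsq (w' j) by [].
  rewrite /K exprS; move: h4.
  move: (normsq a) (normsq (\sum_(j < m) w' j * al j)) (\sum_(j < m) normsq (w' j)) (2 ^+ m : R) => x y z q h4.
  nra.
rewrite e1.
set lam := Num.min (N / 2) (lam' / K).
have l1 : lam <= N / 2 by rewrite /lam ge_min lexx.
have l2 : lam <= lam' / K by rewrite /lam ge_min lexx orbT.
have l0 : 0 < lam by rewrite /lam lt_min; apply/andP; split; apply: divr_gt0.
have hna : 0 <= normsq a by exact: normsq_ge0.
have hW : 0 <= \sum_(j < m) normsq (w' j) by apply: sumr_ge0 => j _; exact: normsq_ge0.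
have t1 := mulr_ge0 (eqbRL (subr_ge0 _ _) l1) hna.
have t2 := mulr_ge0 (mulr_ge0 (eqbRL (subr_ge0 _ _) l2) (ltW hK)) hW.
have t3 : lam' / K * K = lam' by rewrite divfK // gt_eqF.
apply: le_trans (ler_wpM2l (ltW l0) e3) _.
move: t1 t2 t3 e2 hna hW l0.
move: (normsq a) (\sum_(j < m) normsq (w' j)) (lam' / K) => na W q.
move=> t1 t2 t3 e2' hna hW l0'.
nra.
Qed.


Lemma frame_of (n : nat) (Phi : X -> 'I_n -> CR) :
  (forall k, L2 (fun x => Phi x k)) -> (forall x k, inF c (Phi x k)) ->
  indep (fun k x => Phi x k) -> is_cframe mu c Phi.
Proof.
move=> hL hF hI.
have [lam [hlam Hlam]] := @lower n (fun k x => Phi x k) hL (fun i x => hF x i) hI.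
split => //; split; first by move=> k; case: (hL k).
pose S := \sum_(k < n) nrm (fun x => Phi x k).
have hS : 0 <= S by apply: sumr_ge0 => k _; exact: nrm_ge0.
have h2 : 0 <= 2 ^+ n :> R by apply: exprn_ge0.
exists lam, (2 ^+ n * S + lam); split => //; split.
  by rewrite lerDr; apply: mulr_ge0.
move=> v hv.
have hL2 : L2 (fun x => \sum_(k < n) complex.conjc (v k) * Phi x k) by apply: L2_lin.
have E : (\int[mu]_x (normsq (cinner v (Phi x)))%:E)%E =
    (nrm (fun x => \sum_(k < n) complex.conjc (v k) * Phi x k))%:E.
  rewrite -int_nrm //.
  apply: eq_integral => x _; congr EFin.
  rewrite /cinner -normsqJ rmorph_sum; congr normsq; apply: eq_bigr => k _.
  by rewrite rmorphM /= conjcK mulrC.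
have EV : vnormsq v = \sum_(k < n) normsq (complex.conjc (v k)).
  by apply: eq_bigr => k _; rewrite normsqJ.
rewrite E !lee_fin EV; split.
  by apply: Hlam => k; apply: inFJ.
have H := nrm_lin_le (fun k => complex.conjc (v k)) hL; rewrite /= in H; apply: (le_trans H).
rewrite mulrDl mulrC -mulrA; apply: ler_wpDr.
  by apply: mulr_ge0; [exact: ltW|apply: sumr_ge0 => k _; exact: normsq_ge0].
rewrite mulrC; apply: ler_wpM2l => //.
rewrite mulr_sumr; apply: ler_sum => k _; rewrite mulrC; apply: ler_wpM2r; first exact: normsq_ge0.
by apply: (@sum_le_single _ n (fun k => nrm (fun x => Phi x k))) => k'; exact: nrm_ge0.
Qed.

End Frame.


Section Select.
Context {R : realType} {d : measure_display} {X : measurableType d}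
  (mu : {measure set X -> \bar R}) (c : bool).
Local Notation CR := (C R).
Local Notation L2 := (L2 mu).
Local Notation nrm := (nrm mu).
Local Notation ip := (ip mu).
Local Notation indep := (indep mu c).

Lemma ext_sum (m : nat) (i0 : 'I_m.+1) (e : 'I_m -> CR) (G : 'I_m.+1 -> CR) :
  \sum_(k < m.+1) (if unlift i0 k is Some j then e j else 0) * G k =
  \sum_(j < m) e j * G (lift i0 j).
Proof.
rewrite (bigD1_ord i0) //= unlift_none mul0r add0r.
by apply: eq_bigr => j _; rewrite liftK.
Qed.

Lemma select (m : nat) (g : 'I_m.+1 -> X -> CR) (u : X -> CR) (be : 'I_m.+1 -> CR) :
  (forall i, L2 (g i)) -> L2 u -> (forall i, inF c (be i)) -> indep g ->
  exists i0 : 'I_m.+1, indep (fun j x => g (lift i0 j) x + (- be (lift i0 j)) * u x).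
Proof.
move=> hg hu hbe hI.
pose gp := fun i x => g i x + (- be i) * u x.
have hgp : forall i, L2 (gp i) by move=> i; apply: L2_add => //; exact: L2_mulc.
case: (pselect (exists cc : 'I_m.+1 -> CR, (forall i, inF c (cc i)) /\
    nrm (fun x => \sum_(i < m.+1) cc i * gp i x) = 0 /\ exists i, cc i != 0)).
- move=> [cc [hcF [hc0 [i0 hi0]]]]; exists i0 => e heF he0 j.
  pose e' := fun k : 'I_m.+1 => if unlift i0 k is Some j then e j else 0.
  have he'F : forall k, inF c (e' k).
    by move=> k; rewrite /e'; case: (unlift i0 k) => [j'|]; [exact: heF|exact: inF0].
  have he'0 : nrm (fun x => \sum_(k < m.+1) e' k * gp k x) = 0.
    by rewrite -he0; apply: nrm_ext => x; rewrite ext_sum.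
  pose al := \sum_(i < m.+1) cc i * be i.
  pose al' := \sum_(i < m.+1) e' i * be i.
  have halF : inF c al by apply: inF_sum => i; exact: inFM.
  have hal'F : inF c al' by apply: inF_sum => i; exact: inFM.
  have key : forall i, al' * cc i - al * e' i = 0.
    apply: hI.
      by move=> i; apply: inFB; apply: inFM.
    rewrite -(@nrm_zero_comb _ _ _ mu al' (- al) _ _ (L2_lin cc hgp) (L2_lin e' hgp) hc0 he'0).
    apply: nrm_ext => x.
    rewrite /gp !(sum_lin _ be (fun i => g i x)).
    have -> : \sum_(i < m.+1) (al' * cc i - al * e' i) * g i x =
       al' * \sum_(i < m.+1) cc i * g i x - al * \sum_(i < m.+1) e' i * g i x.
      rewrite !mulr_sumr -sumrB; apply: eq_bigr => i _; ring.
    rewrite -/al -/al'; ring.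
  have hal' : al' = 0.
    have := key i0; rewrite /e' unlift_none mulr0 subr0 => /eqP.
    by rewrite mulf_eq0 (negbTE hi0) orbF => /eqP.
  have hal : al != 0.
    apply/eqP => hal0; move/eqP: hi0; apply.
    apply: (hI cc hcF _ i0).
    rewrite -hc0; apply: nrm_ext => x.
    rewrite /gp (sum_lin _ be (fun i => g i x)) -/al hal0 mul0r subr0 //.
  have := key (lift i0 j); rewrite hal' mul0r sub0r /e' liftK => /eqP.
  by rewrite oppr_eq0 mulf_eq0 (negbTE hal) /= => /eqP.
- move=> hno; exists ord0 => e heF he0 j.
  pose e' := fun k : 'I_m.+1 => if unlift ord0 k is Some j then e j else 0.
  have he'F : forall k, inF c (e' k).
    by move=> k; rewrite /e'; case: (unlift ord0 k) => [j'|]; [exact: heF|exact: inF0].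
  have he'0 : nrm (fun x => \sum_(k < m.+1) e' k * gp k x) = 0.
    by rewrite -he0; apply: nrm_ext => x; rewrite ext_sum.
  have [//|hne] := eqVneq (e j) 0.
  exfalso; apply: hno; exists e'; split => //; split => //.
  by exists (lift ord0 j); rewrite /e' liftK.
Qed.

End Select.


Unset Implicit Arguments. Set Strict Implicit. Set Printing Implicit Defensive.

Theorem corollary5p6 (R : realType) (cplx : bool) (d : measure_display)
  (X : measurableType d) (mu : {measure set X -> \bar R}) (n : nat)
  (hn : (1 <= n)%N) (h : X -> C R) (hL2 : L2F mu cplx h)
  (hnz : ~ {ae mu, forall x, h x = 0})
  (dv : 'I_n -> C R) (hdv : forall k, inF cplx (dv k))
  (hdim1 : dv <> (fun _ => 0) -> L2dim_ge mu cplx n)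
  (hdim0 : dv = (fun _ => 0) -> L2dim_ge mu cplx n.+1) :
  exists Phi : X -> 'I_n -> C R,
    is_cframe mu cplx Phi /\ (forall k, L2F mu cplx (fun x => Phi x k)) /\
    Top mu h Phi = dv.
Proof.
case: n hn dv hdv hdim1 hdim0 => [//|n'] _ dv hdv hdim1 hdim0.
have [hhF hhL] := (L2FE _ _ _).1 hL2.
pose u := fun x => complex.conjc (h x).
have huL : L2 mu u by exact: L2_conj.
have huF : forall x, inF cplx (u x) by move=> x; exact: inFJ.
pose cN := nrm mu u.
have hcN : 0 < cN.
  rewrite lt_def nrm_ge0 andbT; apply/eqP => h0; apply: hnz.
  have := nrm0_ae huL h0; apply: filterS => x; rewrite /u => /eqP.
  by rewrite conjc_eq0 => /eqP.
pose Nc : C R := complex.Complex cN 0.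
have hNc : Nc != 0.
  by apply/eqP => /(congr1 (@complex.Re R)) /= e; rewrite e ltxx in hcN.
have huu : ip mu u u = Nc by rewrite ip_self.
have hTop : forall Phi : X -> 'I_n'.+1 -> C R,
    Top mu h Phi = fun k => ip mu (fun x => Phi x k) u.
  move=> Phi; apply: funext => k; rewrite /Top /ip; apply: cint_ext => x.
  by rewrite /u conjcK mulrC.
have dimI : forall m, L2dim_ge mu cplx m -> exists g : 'I_m -> X -> C R,
    (forall i, L2 mu (g i)) /\ (forall i x, inF cplx (g i x)) /\ indep mu cplx g.
  move=> m [g [hg hgi]]; exists g; split; [|split].
  - by move=> i; have [] := (L2FE _ _ _).1 (hg i).
  - by move=> i; have [] := (L2FE _ _ _).1 (hg i).
  - move=> w hw h0; apply: hgi => //; apply: nrm0_ae => //.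
    by apply: L2_lin => i; have [] := (L2FE _ _ _).1 (hg i).
pose gp := fun (g : _ -> X -> C R) (be : _ -> C R) i x => g i x + (- be i) * u x.
have gp0 : forall m (g : 'I_m -> X -> C R), (forall i, L2 mu (g i)) ->
    forall i, ip mu (gp _ g (fun i => ip mu (g i) u / Nc) i) u = 0.
  move=> m g hg i; rewrite /gp (ip_addl (hg i) (L2_mulc _ huL) huL).
  by rewrite (ip_mulcl _ huL huL) huu mulNr mulfVK // subrr.
have beF : forall m (g : 'I_m -> X -> C R), (forall i x, inF cplx (g i x)) ->
    forall i, inF cplx (ip mu (g i) u / Nc).
  move=> m g hgF i; apply: inFM; first by apply: ip_inF.
  exact/inFV/inFR.
have [dz|dnz] := pselect (dv = (fun _ => 0)).
- have [g [hg [hgF hgI]]] := dimI _ (hdim0 dz).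
  pose be := fun i => ip mu (g i) u / Nc.
  have [i0 hI0] := select hg huL (beF _ g hgF) hgI.
  pose Phi := fun x (k : 'I_n'.+1) => g (lift i0 k) x + (- be (lift i0 k)) * u x.
  have hPL : forall k, L2 mu (fun x => Phi x k).
    by move=> k; rewrite /Phi; apply: L2_add => //; exact: L2_mulc.
  have hPF : forall x k, inF cplx (Phi x k).
    move=> x k; rewrite /Phi; apply: inFD => //; apply: inFM => //.
    exact/inFN/beF.
  exists Phi; split; first exact: (frame_of hPL hPF hI0).
  split; first by move=> k; apply/L2FE.
  rewrite hTop dz; apply: funext => k.
  exact: (gp0 _ g hg (lift i0 k)).
- have [g [hg [hgF hgI]]] := dimI _ (hdim1 dnz).
  pose be := fun i => ip mu (g i) u / Nc.
  have [i0 hI0] := select hg huL (beF _ g hgF) hgI.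
  pose e := fun (j : 'I_n') x => g (lift i0 j) x + (- be (lift i0 j)) * u x.
  have heL : forall j, L2 mu (e j).
    by move=> j; rewrite /e; apply: L2_add => //; exact: L2_mulc.
  have heF : forall j x, inF cplx (e j x).
    move=> j x; rewrite /e; apply: inFD => //; apply: inFM => //.
    exact/inFN/beF.
  have he0 : forall j, ip mu (e j) u = 0 by move=> j; exact: (gp0 _ g hg (lift i0 j)).
  have [k0 hk0] : exists k0, dv k0 != 0.
    apply: contrapT => hno; apply: dnz; apply: funext => k.
    have [//|hk] := eqVneq (dv k) 0.
    by exfalso; apply: hno; exists k.
  pose E := fun k x => if unlift k0 k is Some j then e j x else 0.
  pose Phi := fun x (k : 'I_n'.+1) => (dv k / Nc) * u x + E k x.
  have hEL : forall k, L2 mu (E k).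
    by move=> k; rewrite /E; case: (unlift k0 k) => [j|]; [exact: heL|exact: L2_0].
  have hEF : forall k x, inF cplx (E k x).
    by move=> k x; rewrite /E; case: (unlift k0 k) => [j|]; [exact: heF|exact: inF0].
  have hE0 : forall k, ip mu (E k) u = 0.
    move=> k; rewrite /E; case: (unlift k0 k) => [j|]; first exact: he0.
    exact: ip0l.
  have hPL : forall k, L2 mu (fun x => Phi x k).
    by move=> k; rewrite /Phi; apply: L2_add => //; exact: L2_mulc.
  have hPF : forall x k, inF cplx (Phi x k).
    move=> x k; rewrite /Phi; apply: inFD => //; apply: inFM => //.
    by apply: inFM => //; exact/inFV/inFR.
  have hPI : indep mu cplx (fun k x => Phi x k).
    move=> v hv hv0.
    pose a := \sum_(k < n'.+1) v k * (dv k / Nc).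
    pose P := fun x => \sum_(j < n') v (lift k0 j) * e j x.
    have hPL' : L2 mu P by apply: L2_lin.
    have hP0 : ip mu P u = 0.
      rewrite /P (@ip_suml _ _ _ mu n' (fun j x => v (lift k0 j) * e j x) u (fun j => L2_mulc _ (heL j)) huL).
      by apply: big1 => j _; rewrite (ip_mulcl _ (heL j) huL) he0 mulr0.
    have eq1 : nrm mu (fun x => \sum_(k < n'.+1) v k * Phi x k) = normsq a * cN + nrm mu P.
      rewrite -(nrm_Pyth a huL hPL' hP0); apply: nrm_ext => x.
      rewrite /Phi /a /P /E.
      under eq_bigr do rewrite mulrDr.
      rewrite big_split /= mulr_suml.
      congr (_ + _); first by apply: eq_bigr => k _; rewrite mulrA.
      rewrite (bigD1_ord k0) //= unlift_none mulr0 add0r.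
      by apply: eq_bigr => j _; rewrite liftK.
    rewrite eq1 in hv0.
    have hna := normsq_ge0 a.
    have hnP := nrm_ge0 mu P.
    have hnP0 : nrm mu P = 0.
      apply/eqP; rewrite eq_le hnP andbT.
      have := mulr_ge0 hna (ltW hcN); lra.
    have hna0 : normsq a = 0.
      have : normsq a * cN = 0 by lra.
      by move/eqP; rewrite mulf_eq0 (gt_eqF hcN) orbF => /eqP.
    have hvl : forall j, v (lift k0 j) = 0.
      by apply: hI0 => // j; exact: hv.
    have ha : a = v k0 * (dv k0 / Nc).
      rewrite /a (bigD1_ord k0) //= big1 ?addr0 // => j _.
      by rewrite hvl mul0r.
    have hvk0 : v k0 = 0.
      move: (normsq_eq0 hna0); rewrite ha => /eqP.
      rewrite mulf_eq0 => /orP [/eqP //|].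
      by rewrite mulf_eq0 invr_eq0 (negbTE hk0) (negbTE hNc).
    move=> k; case: (eqVneq k0 k) => [<- //|hne].
    by have [j -> _] := unlift_some hne; exact: hvl.
  exists Phi; split; first exact: (frame_of hPL hPF hPI).
  split; first by move=> k; apply/L2FE.
  rewrite hTop; apply: funext => k.
  rewrite /Phi (ip_addl (L2_mulc _ huL) (hEL k) huL) (ip_mulcl _ huL huL) huu hE0.
  by rewrite addr0 mulfVK.
Qed.
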